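(* Let $\mathbb{B}$ be a sized CPO with size ordinal $\zeta_{\mathbb{B}}$ and set of maximal elements $B$, let $S$ be a set, $h:S\times B^m\to B$ and $g_i:S\to S$ ($i=1,\ldots,m$). Suppose that for each $x\in S$, $\eta_h^x:\mathrm{On}(\zeta_{\mathbb{B}})^m\to\mathrm{On}(\zeta_{\mathbb{B}})$ is a production function for $\bar y\mapsto h(x,\bar y)$, and that $\eta_h^x(\alpha_1,\ldots,\alpha_m)>\min_{i=1,\ldots,m}\alpha_i$ for each $x\in S$ and all $\alpha_1,\ldots,\alpha_m\le\zeta_{\mathbb{B}}$ such that $\alpha_k<\zeta_{\mathbb{B}}$ for some $1\le k\le m$. Then there exists a unique function $f:S\to B$ satisfying $f(x)=h(x,f(g_1(x)),\ldots,f(g_m(x)))$ for all $x\in S$.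
   Context: A CPO is a partial order with a least element in which every directed set has a supremum; continuity means preservation of directed suprema; products are ordered componentwise. $\mathrm{On}(\zeta)$ is the set of ordinals $\le\zeta$. A sized CPO is a tuple $\langle\mathbb{B},\zeta,s,\mathtt{cut}\rangle$ where $\mathbb{B}$ is a CPO, $\zeta$ an ordinal, $s:\mathbb{B}\to\mathrm{On}(\zeta)$, $\mathtt{cut}:\mathrm{On}(\zeta)\times\mathbb{B}\to\mathbb{B}$, such that: $s$ is surjective and continuous; $s(x)=\zeta$ iff $x$ is maximal; $\mathtt{cut}$ is monotone in both arguments; $s(\mathtt{cut}(\alpha,x))=\alpha$ if $s(x)>\alpha$; $\mathtt{cut}(\alpha,x)=x$ if $s(x)\le\alpha$. A function between CPOs is regular if it is monotone and maps maximal elements to maximal elements. A production function for a function $f:B^m\to B$ (between sets of maximal elements) is any $\eta:\mathrm{On}(\zeta_{\mathbb{B}})^m\to\mathrm{On}(\zeta_{\mathbb{B}})$ such that there is a regular $f^*:\mathbb{B}^m\to\mathbb{B}$ extending $f$ with $\eta(s(y_1),\ldots,s(y_m))=s(f^*(y_1,\ldots,y_m))$ for all $y_i\in\mathbb{B}$. *)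

(* Defs.v *)
From mathcomp Require Import all_boot.
Set Implicit Arguments. Unset Strict Implicit. Unset Printing Implicit Defensive.

Definition directed {T : Type} (le : T -> T -> Prop) (D : T -> Prop) : Prop :=
  (exists x, D x) /\
  (forall x y, D x -> D y -> exists z, D z /\ le x z /\ le y z).

Definition is_sup {T : Type} (le : T -> T -> Prop) (D : T -> Prop) (u : T) : Prop :=
  (forall x, D x -> le x u) /\ (forall v, (forall x, D x -> le x v) -> le u v).

Definition maximal {T : Type} (le : T -> T -> Prop) (x : T) : Prop :=
  forall y, le x y -> y = x.

Definition monotone {T U : Type} (leT : T -> T -> Prop) (leU : U -> U -> Prop)
  (f : T -> U) : Prop := forall x y, leT x y -> leU (f x) (f y).

Definition continuous_map {T U : Type} (leT : T -> T -> Prop) (leU : U -> U -> Prop)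
  (f : T -> U) : Prop :=
  forall (D : T -> Prop) (d : T), directed leT D -> is_sup leT D d ->
    is_sup leU (fun u => exists x, D x /\ f x = u) (f d).

Record CPO := {
  cpo_car :> Type;
  cpo_le : cpo_car -> cpo_car -> Prop;
  cpo_refl : forall x, cpo_le x x;
  cpo_trans : forall x y z, cpo_le x y -> cpo_le y z -> cpo_le x z;
  cpo_antisym : forall x y, cpo_le x y -> cpo_le y x -> x = y;
  cpo_bot : cpo_car;
  cpo_bot_least : forall x, cpo_le cpo_bot x;
  cpo_dsup : forall D, directed cpo_le D -> exists u, is_sup cpo_le D u
}.

(* ---------- On(zeta): the ordinals <= zeta ----------
   Represented (up to isomorphism) as a well-ordered set with a greatest
   element zeta; every such set is order-isomorphic to On(zeta) for a unique
   ordinal zeta, and conversely. *)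
Record OrdSeg := {
  on_car :> Type;
  on_le : on_car -> on_car -> Prop;
  on_refl : forall a, on_le a a;
  on_trans : forall a b c, on_le a b -> on_le b c -> on_le a c;
  on_antisym : forall a b, on_le a b -> on_le b a -> a = b;
  on_total : forall a b, on_le a b \/ on_le b a;
  on_wf : forall P : on_car -> Prop, (exists a, P a) ->
            exists a, P a /\ forall b, P b -> on_le a b;
  on_zeta : on_car;
  on_zeta_top : forall a, on_le a on_zeta
}.

Definition on_lt (O : OrdSeg) (a b : O) : Prop := on_le a b /\ a <> b.

Record SizedCPO := {
  sz_B : CPO;
  sz_On : OrdSeg;
  sz_s : sz_B -> sz_On;
  sz_cut : sz_On -> sz_B -> sz_B;
  sz_s_surj : forall a : sz_On, exists x, sz_s x = a;
  sz_s_cont : continuous_map (@cpo_le sz_B) (@on_le sz_On) sz_s;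
  sz_s_zeta : forall x, sz_s x = on_zeta sz_On <-> maximal (@cpo_le sz_B) x;
  sz_cut_mono : forall a b x y, on_le a b -> cpo_le x y ->
                  cpo_le (sz_cut a x) (sz_cut b y);
  sz_cut_s : forall a x, on_lt a (sz_s x) -> sz_s (sz_cut a x) = a;
  sz_cut_id : forall a x, on_le (sz_s x) a -> sz_cut a x = x
}.

Definition maxel (BB : SizedCPO) : Type :=
  {x : sz_B BB | maximal (@cpo_le (sz_B BB)) x}.

Definition prod_le (BB : SizedCPO) (m : nat) (y z : 'I_m -> sz_B BB) : Prop :=
  forall i, cpo_le (y i) (z i).

Definition regular (BB : SizedCPO) (m : nat) (F : ('I_m -> sz_B BB) -> sz_B BB) : Prop :=
  monotone (@prod_le BB m) (@cpo_le (sz_B BB)) F /\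
  (forall y, maximal (@prod_le BB m) y -> maximal (@cpo_le (sz_B BB)) (F y)).

Definition production_function (BB : SizedCPO) (m : nat)
  (f : ('I_m -> maxel BB) -> maxel BB) (eta : ('I_m -> sz_On BB) -> sz_On BB) : Prop :=
  exists F : ('I_m -> sz_B BB) -> sz_B BB,
    regular F /\
    (forall y : 'I_m -> maxel BB, F (fun i => sval (y i)) = sval (f y)) /\
    (forall y : 'I_m -> sz_B BB, eta (fun i => sz_s (y i)) = sz_s (F y)).

(* Main.v *)
Require Import Defs.
From mathcomp Require Import all_boot.
From Stdlib Require Import Classical ClassicalEpsilon ProofIrrelevance FunctionalExtensionality PropExtensionality.
Set Implicit Arguments. Unset Strict Implicit.

Definition bsup (B : CPO) (E : B -> Prop) : B :=
  match excluded_middle_informative (exists u, is_sup (@cpo_le B) E u) with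
  | left H => proj1_sig (constructive_indefinite_description _ H)
  | right _ => @cpo_bot B
  end.

Lemma bsup_spec (B : CPO) (E : B -> Prop) :
  (exists u, is_sup (@cpo_le B) E u) -> is_sup (@cpo_le B) E (bsup E).
Proof.
  intro H. unfold bsup. destruct (excluded_middle_informative _) as [H'|H'].
  - exact (proj2_sig (constructive_indefinite_description _ H')).
  - contradiction.
Qed.

Lemma chain_sup (B : CPO) (E : B -> Prop) :
  (forall a b, E a -> E b -> cpo_le a b \/ cpo_le b a) ->
  exists u, is_sup (@cpo_le B) E u.
Proof.
  intro Hc. destruct (classic (exists a, E a)) as [Hne|Hne].
  - apply cpo_dsup. split; [exact Hne|].
    intros a b Ha Hb. destruct (Hc a b Ha Hb) as [H|H].
    + exists b. split; [exact Hb| split; [exact H| apply cpo_refl]].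
    + exists a. split; [exact Ha| split; [apply cpo_refl| exact H]].
  - exists (@cpo_bot B). split.
    + intros x Hx. exfalso. apply Hne. exists x. exact Hx.
    + intros v _. apply cpo_bot_least.
Qed.

Definition fle (B : CPO) (S : Type) (p q : S -> B) := forall x, cpo_le (p x) (q x).

Definition supr (B : CPO) (S : Type) (D : (S -> B) -> Prop) : S -> B :=
  fun x => bsup (fun b => exists q, D q /\ q x = b).

Lemma supr_spec (B : CPO) (S : Type) (D : (S -> B) -> Prop) :
  (forall p q, D p -> D q -> fle p q \/ fle q p) ->
  forall x, is_sup (@cpo_le B) (fun b => exists q, D q /\ q x = b) (supr D x).
Proof.
  intros Hc x. apply bsup_spec. apply chain_sup.
  intros a b [p [Hp Ha]] [q [Hq Hb]]. subst a b.
  destruct (Hc p q Hp Hq) as [H|H]; [left|right]; apply H.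
Qed.

Lemma wf_on (O : OrdSeg) : well_founded (fun a b : O => on_lt a b).
Proof.
  intro a. apply NNPP. intro Ha.
  destruct (@on_wf O (fun a => ~ Acc (fun a b : O => on_lt a b) a) (ex_intro _ a Ha))
    as [a0 [H0 Hmin]].
  apply H0. constructor. intros y [Hy Hne]. apply NNPP. intro Hy'. apply Hne.
  apply on_antisym; auto.
Qed.

Lemma lt_le_trans (O : OrdSeg) (c b a : O) : on_lt c b -> on_le b a -> on_lt c a.
Proof.
  intros [H1 H2] H3. split; [eapply on_trans; eauto|].
  intro E. subst c. apply H2. apply on_antisym; auto.
Qed.

Definition it (O : OrdSeg) (B : CPO) (S : Type) (Phi : (S -> B) -> S -> B) : O -> S -> B :=
  Fix (@wf_on O) (fun _ => S -> B)
    (fun a rec => Phi (supr (fun q => exists b (H : on_lt b a), rec b H = q))).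

Definition Dset (O : OrdSeg) (B : CPO) (S : Type) (Phi : (S -> B) -> S -> B) (a : O) :=
  fun q => exists b, on_lt b a /\ @it O B S Phi b = q.

Lemma it_eq (O : OrdSeg) (B : CPO) (S : Type) (Phi : (S -> B) -> S -> B) (a : O) :
  it Phi a = Phi (supr (Dset Phi a)).
Proof.
  assert (E : forall D1 D2 : (S -> B) -> Prop, D1 = D2 -> Phi (supr D1) = Phi (supr D2))
    by (intros; subst; reflexivity).
  unfold Dset, it. rewrite Fix_eq.
  - apply E. apply functional_extensionality; intro q; apply propositional_extensionality.
    split.
    + intros [b [H e]]. exists b. split; auto.
    + intros [b [H e]]. exists b, H. exact e.
  - intros x f g0 Hfg. apply E.
    apply functional_extensionality; intro q; apply propositional_extensionality.
    split; intros [b [H e]]; exists b, H; [rewrite <- Hfg|rewrite Hfg]; exact e.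
Qed.

Lemma it_chain (O : OrdSeg) (B : CPO) (S : Type) (Phi : (S -> B) -> S -> B)
  (HPhi : forall p q, fle p q -> fle (Phi p) (Phi q)) :
  forall a b : O, on_le b a -> fle (it Phi b) (it Phi a).
Proof.
  intro a. induction a as [a IH] using (well_founded_induction (@wf_on O)).
  intros b Hba.
  destruct (classic (b = a)) as [Eb|Hne]. { subst b. intro x; apply cpo_refl. }
  assert (Hch : forall a', on_le a' a -> forall p q, Dset Phi a' p -> Dset Phi a' q -> fle p q \/ fle q p).
  { intros a' Ha' p q [c1 [H1 <-]] [c2 [H2 <-]].
    destruct (on_total c1 c2) as [H|H].
    - left. apply IH; auto. eapply lt_le_trans; eauto.
    - right. apply IH; auto. eapply lt_le_trans; eauto. }
  rewrite (it_eq Phi a) (it_eq Phi b). apply HPhi. intro x.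
  pose proof (supr_spec (Hch a (on_refl _)) x) as Sa.
  pose proof (supr_spec (Hch b Hba) x) as Sb.
  apply (proj2 Sb). intros y [q [[c [Hc Eq]] Ey]].
  apply (proj1 Sa). exists q. split; auto. exists c. split; auto.
  eapply lt_le_trans; eauto.
Qed.

Lemma it_below (O : OrdSeg) (B : CPO) (S : Type) (Phi : (S -> B) -> S -> B)
  (HPhi : forall p q, fle p q -> fle (Phi p) (Phi q)) (p : S -> B) :
  fle (Phi p) p -> forall a : O, fle (it Phi a) p.
Proof.
  intros Hp a. induction a as [a IH] using (well_founded_induction (@wf_on O)).
  assert (Hch : forall p q, Dset Phi a p -> Dset Phi a q -> fle p q \/ fle q p).
  { intros p1 q1 [c1 [H1 <-]] [c2 [H2 <-]].
    destruct (on_total c1 c2) as [H|H]; [left|right]; apply (it_chain HPhi); auto. }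
  rewrite (it_eq Phi a). intro x.
  apply cpo_trans with (Phi p x); [|apply Hp].
  apply HPhi. intro y. apply (proj2 (supr_spec Hch y)).
  intros z [q [[c [Hc <-]] <-]]. apply IH; auto.
Qed.

Lemma s_mono (BB : SizedCPO) (a b : sz_B BB) : cpo_le a b -> on_le (sz_s a) (sz_s b).
Proof.
  intro Hab. pose proof (@sz_s_cont BB) as Hc. unfold continuous_map in Hc.
  assert (Hd : directed (@cpo_le (sz_B BB)) (fun u => u = a \/ u = b)).
  { split. exists a; left; auto.
    intros x y Hx Hy. exists b. split; [right; auto|].
    destruct Hx as [->| ->]; destruct Hy as [->| ->]; split; auto using cpo_refl. }
  assert (Hs : is_sup (@cpo_le (sz_B BB)) (fun u => u = a \/ u = b) b).
  { split. intros x [->| ->]; auto using cpo_refl. intros v Hv. apply Hv. right; auto. }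
  destruct (Hc _ _ Hd Hs) as [H1 _].
  apply H1. exists a. split; auto.
Qed.

Lemma sig_eq (A : Type) (P : A -> Prop) (u v : sig P) : proj1_sig u = proj1_sig v -> u = v.
Proof.
  destruct u as [u pu], v as [v pv]. simpl. intro E. subst v. f_equal. apply proof_irrelevance.
Qed.

Theorem corollary4p8 (BB : SizedCPO) (m : nat) (S : Type)
  (h : S -> ('I_m -> maxel BB) -> maxel BB) (g : 'I_m -> S -> S)
  (eta : S -> ('I_m -> sz_On BB) -> sz_On BB) :
  (forall x, production_function (h x) (eta x)) ->
  (forall x (alpha : 'I_m -> sz_On BB),
     (exists k, on_lt (alpha k) (on_zeta (sz_On BB))) ->
     forall mu, (exists i, alpha i = mu) -> (forall i, on_le mu (alpha i)) ->
       on_lt mu (eta x alpha)) ->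
  exists f : S -> maxel BB,
    (forall x, f x = h x (fun i => f (g i x))) /\
    (forall f' : S -> maxel BB, (forall x, f' x = h x (fun i => f' (g i x))) ->
       forall x, f' x = f x).
Proof.
  intros Hprod Heta.
  pose Fx := fun x => proj1_sig (constructive_indefinite_description _ (Hprod x)).
  assert (HF : forall x, regular (Fx x) /\
     (forall y, Fx x (fun i => sval (y i)) = sval (h x y)) /\
     (forall y, eta x (fun i => sz_s (y i)) = sz_s (Fx x y))).
  { intro x. exact (proj2_sig (constructive_indefinite_description _ (Hprod x))). }
  pose Phi := fun (q : S -> sz_B BB) x => Fx x (fun i => q (g i x)).
  assert (HPhi : forall p q, fle p q -> fle (Phi p) (Phi q)).
  { intros p q Hpq x. apply (proj1 (proj1 (HF x))). intro i. apply Hpq. }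
  assert (Hch : forall a : sz_On BB, forall p q, Dset Phi a p -> Dset Phi a q -> fle p q \/ fle q p).
  { intros a p1 q1 [c1 [H1 <-]] [c2 [H2 <-]].
    destruct (on_total c1 c2) as [H|H]; [left|right]; apply (it_chain HPhi); auto. }
  assert (Hsize : forall (a : sz_On BB) x, on_le a (sz_s (it Phi a x))).
  { intro a. induction a as [a IH] using (well_founded_induction (@wf_on (sz_On BB))).
    intro x. rewrite (it_eq Phi a).
    set d := supr (Dset Phi a).
    set alpha := fun i => sz_s (d (g i x)).
    assert (Heq : eta x alpha = sz_s (Fx x (fun i => d (g i x))))
      by exact (proj2 (proj2 (HF x)) (fun i => d (g i x))).
    enough (Hgoal : on_le a (eta x alpha)) by (rewrite Heq in Hgoal; exact Hgoal).
    assert (Hge : forall c, on_lt c a -> forall i, on_le c (alpha i)).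
    { intros c Hc i. apply on_trans with (sz_s (it Phi c (g i x))); [apply IH; auto|].
      apply s_mono. apply (proj1 (supr_spec (Hch a) (g i x))).
      exists (it Phi c). split; auto. exists c. split; auto. }
    destruct (classic (exists k, on_lt (alpha k) (on_zeta (sz_On BB)))) as [Hk|Hno].
    - destruct Hk as [k Hk].
      destruct (@on_wf (sz_On BB) (fun mu => exists i, alpha i = mu) (ex_intro _ _ (ex_intro _ k erefl)))
        as [mu [[i0 Hi0] Hmin]].
      assert (Hmu : on_lt mu (eta x alpha)).
      { apply Heta. exists k; exact Hk. exists i0; exact Hi0.
        intro i. apply Hmin. exists i; auto. }
      destruct (on_total a (eta x alpha)) as [H|H]; auto.
      destruct (classic (eta x alpha = a)) as [E|Hne]. { rewrite E; apply on_refl. }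
      exfalso. pose proof (Hge _ (conj H Hne) i0) as Hle. rewrite Hi0 in Hle.
      destruct Hmu as [Hmu1 Hmu2]. apply Hmu2. apply on_antisym; auto.
    - assert (Hz : forall i, alpha i = on_zeta (sz_On BB)).
      { intro i. apply NNPP. intro Hn. apply Hno. exists i. split; auto. apply on_zeta_top. }
      assert (Hm : forall i, maximal (@cpo_le (sz_B BB)) (d (g i x))).
      { intro i. apply (proj1 (sz_s_zeta _)). apply Hz. }
      assert (Hmp : maximal (@prod_le BB m) (fun i => d (g i x))).
      { intros z Hzz. apply functional_extensionality. intro i. apply Hm. apply Hzz. }
      pose proof (proj2 (proj1 (HF x)) _ Hmp) as HM.
      rewrite Heq. rewrite (proj2 (sz_s_zeta _) HM). apply on_zeta_top. }
  set zeta := on_zeta (sz_On BB).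
  assert (Hmaxz : forall x, maximal (@cpo_le (sz_B BB)) (it Phi zeta x)).
  { intro x. apply (proj1 (sz_s_zeta _)). apply on_antisym; [apply on_zeta_top|apply Hsize]. }
  exists (fun x => exist _ (it Phi zeta x) (Hmaxz x) : maxel BB).
  split.
  - intro x. apply sig_eq. simpl. rewrite <- (proj1 (proj2 (HF x))). simpl.
    assert (H1 : fle (supr (Dset Phi zeta)) (it Phi zeta)).
    { intro y. apply (proj2 (supr_spec (Hch zeta) y)).
      intros z [q [[c [Hc <-]] <-]]. apply (it_chain HPhi). apply on_zeta_top. }
    pose proof (HPhi _ _ H1 x) as H2. rewrite <- (it_eq Phi zeta) in H2.
    symmetry. apply (Hmaxz x). exact H2.
  - intros f' Hf' x. apply sig_eq. simpl.
    assert (Hp : fle (Phi (fun y => sval (f' y))) (fun y => sval (f' y))).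
    { intro y. simpl. rewrite (Hf' y). rewrite <- (proj1 (proj2 (HF y))).
      apply cpo_refl. }
    apply (Hmaxz x). apply (it_below HPhi Hp).
Qed.
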